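(* $(\Sigma^{\mathrm{mod}}_{\mathrm{ADF}}\setminus\{\emptyset\})\subseteq\Sigma^{\mathrm{prf}}_{\mathrm{ADF}}$.
   Context: Let $A$ be a finite set of statements; an interpretation is $v:A\to\{\mathbf{t},\mathbf{f},\mathbf{u}\}$. The information ordering is $\mathbf{u}<_i\mathbf{t}$, $\mathbf{u}<_i\mathbf{f}$, extended pointwise; $[v]_2$ is the set of two-valued interpretations extending $v$. An ADF is $D=(A,L,C)$ with an acceptance formula $\varphi_a$ over the parents of each statement $a$. $\Gamma_D(v)(a)$ is the greatest lower bound w.r.t. $\leq_i$ (consensus: $\mathbf{t}$ if all $\mathbf{t}$, $\mathbf{f}$ if all $\mathbf{f}$, else $\mathbf{u}$) of $\{w(\varphi_a)\mid w\in[v]_2\}$. $v$ is admissible iff $v\leq_i\Gamma_D(v)$, preferred iff $\leq_i$-maximal admissible, a two-valued model iff two-valued and $\Gamma_D(v)=v$. The signature of ADFs under semantics $\sigma$ is $\Sigma^\sigma_{\mathrm{ADF}}=\{\sigma(D)\mid D \text{ an ADF over } A\}$, where $\mathrm{mod}(D)$ and $\mathrm{prf}(D)$ are the sets of two-valued models and preferred interpretations of $D$. *)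

(* Defs.v *)
From mathcomp Require Import all_boot.
Set Implicit Arguments. Unset Strict Implicit. Unset Printing Implicit Defensive.

(* Truth values: Some true = t, Some false = f, None = u. *)
Definition tval := option bool.

Inductive formula (A : Type) : Type :=
| FVar of A
| FTop
| FBot
| FNeg of formula A
| FAnd of formula A & formula A
| FOr of formula A & formula A.

Fixpoint fvars (A : Type) (phi : formula A) : seq A :=
  match phi with
  | FVar a => [:: a]
  | FTop | FBot => [::]
  | FNeg p => fvars p
  | FAnd p q | FOr p q => fvars p ++ fvars q
  end.

Section ADF.
Variable A : finType.

Definition interp := {ffun A -> tval}.

Fixpoint feval (w : interp) (phi : formula A) : bool :=
  match phi with
  | FVar a => w a == Some true
  | FTop => true
  | FBot => false
  | FNeg p => ~~ feval w p
  | FAnd p q => feval w p && feval w q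
  | FOr p q => feval w p || feval w q
  end.

Definition leqi_val (x y : tval) : bool := (x == None) || (x == y).
Definition leqi (v w : interp) : bool := [forall a, leqi_val (v a) (w a)].

Definition two_valued (v : interp) : bool := [forall a, v a != None].

Definition ext2 (v : interp) : {set interp} :=
  [set w | two_valued w && leqi v w].

Record ADF := mkADF {
  links : rel A;
  acc : A -> formula A;
  acc_parents : forall a b, b \in fvars (acc a) -> links b a
}.

Definition Gamma (D : ADF) (v : interp) : interp :=
  [ffun a =>
     if [forall w in ext2 v, feval w (acc D a)] then Some true
     else if [forall w in ext2 v, ~~ feval w (acc D a)] then Some false
     else None].

Definition admissible (D : ADF) (v : interp) : bool := leqi v (Gamma D v).

Definition preferred (D : ADF) (v : interp) : bool :=
  admissible D v && [forall w, (admissible D w && leqi v w) ==> (w == v)].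

Definition two_valued_model (D : ADF) (v : interp) : bool :=
  two_valued v && (Gamma D v == v).

Definition mod_sem (D : ADF) : {set interp} := [set v | two_valued_model D v].
Definition prf_sem (D : ADF) : {set interp} := [set v | preferred D v].

Definition in_signature (sigma : ADF -> {set interp}) (S : {set interp}) : Prop :=
  exists D : ADF, sigma D = S.

End ADF.

(* Main.v *)
Require Import Defs.
From mathcomp Require Import all_boot.
Set Implicit Arguments. Unset Strict Implicit. Unset Printing Implicit Defensive.

Section Constr.
Variable A : finType.
Variable S : {set interp A}.

Definition lit (v : interp A) (x : A) : formula A :=
  if v x == Some true then FVar x else FNeg (FVar x).
Definition chi (v : interp A) : formula A :=
  foldr (@FAnd A) (@FTop A) (map (lit v) (enum A)).
Definition disjS : formula A := foldr (@FOr A) (@FBot A) (map chi (enum S)).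
Definition phi (a : A) : formula A :=
  FOr (FAnd disjS (FVar a)) (FAnd (FNeg disjS) (FNeg (FVar a))).

Lemma acc_ok : forall a b, b \in fvars (phi a) -> (fun _ _ : A => true) b a.
Proof. by []. Qed.

Definition Dc : ADF A := @mkADF A (fun _ _ => true) phi acc_ok.

Lemma feval_chi w v : feval w (chi v) =
  all (fun x => (w x == Some true) == (v x == Some true)) (enum A).
Proof.
rewrite /chi; elim: (enum A) => //= x s ->; congr (_ && _).
rewrite /lit; case: (v x == Some true) => /=; by case: (w x == Some true).
Qed.

Lemma two_eq (w v : interp A) : two_valued w -> two_valued v ->
  feval w (chi v) = (w == v).
Proof.
move=> /forallP tw /forallP tv; rewrite feval_chi.
apply/allP/eqP => [H|->]; last by move=> x _; rewrite eqxx.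
apply/ffunP => x; have := H x (mem_enum A x).
move: (tw x) (tv x); case: (w x) => [[]|] //; case: (v x) => [[]|] //.
Qed.

Hypothesis Stwo : forall v, v \in S -> two_valued v.

Lemma feval_disj w : two_valued w -> feval w disjS = (w \in S).
Proof.
move=> tw; rewrite /disjS -mem_enum.
have: forall v, v \in enum S -> two_valued v by move=> v; rewrite mem_enum; apply: Stwo.
elim: (enum S) => //= v s IH H.
rewrite in_cons IH; last by move=> x hx; apply: H; rewrite in_cons hx orbT.
by rewrite two_eq // H // mem_head.
Qed.

Lemma feval_phi w a : two_valued w ->
  feval w (phi a) = ((w \in S) == (w a == Some true)).
Proof.
move=> tw; rewrite /phi /= feval_disj //.
by case: (w \in S); case: (w a == Some true).
Qed.

Lemma leqi_two (v w : interp A) : two_valued v -> @leqi A v w -> w = v.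
Proof.
move=> /forallP tv /forallP H; apply/ffunP => x; move: (tv x) (H x).
by rewrite /leqi_val => /negbTE -> /= /eqP.
Qed.

Lemma ext2_two (v : interp A) : two_valued v -> ext2 v = [set v].
Proof.
move=> tv; apply/setP => w; rewrite !inE; apply/andP/eqP => [[_ /(leqi_two tv)]//|->].
split=> //; apply/forallP => x; by rewrite /leqi_val eqxx orbT.
Qed.

Lemma S_adm v : v \in S -> admissible Dc v.
Proof.
move=> vS; have tv := Stwo vS.
rewrite /admissible /Gamma ext2_two //; apply/forallP => a; rewrite ffunE /=.
rewrite /leqi_val; apply/orP; right.
have E : forall P : interp A -> bool, [forall w in [set v], P w] = P v.
  move=> P; apply/forallP/idP => [/(_ v)|Pv w]; first by rewrite inE eqxx.
  by rewrite inE; apply/implyP => /eqP ->.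
rewrite !E /= feval_disj // vS /=.
move/forallP: tv => /(_ a); case: (v a) => [[]|] //.
Qed.

Lemma S_prf v : v \in S -> preferred Dc v.
Proof.
move=> vS; rewrite /preferred S_adm //=; apply/forallP => w; apply/implyP.
by case/andP => _ /(leqi_two (Stwo vS)) ->.
Qed.

Lemma prf_S u : S != set0 -> preferred Dc u -> u \in S.
Proof.
move=> /set0Pn [v0 v0S] /andP [adm /forallP mx].
suff [w wS uw] : exists2 w, w \in S & leqi u w.
  by move: (mx w); rewrite S_adm //= uw => /eqP <-.
case: (boolP [exists a, u a != None]); last first.
  rewrite negb_exists => /forallP H; exists v0 => //; apply/forallP => x.
  by move: (H x); rewrite negbK /leqi_val => ->.
case/existsP => a ua.
pose w0 : interp A := [ffun x => if u x is Some c then Some c else Some true].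
have tw0 : two_valued w0 by apply/forallP => x; rewrite ffunE; case: (u x).
have uw0 : leqi u w0.
  by apply/forallP => x; rewrite /leqi_val ffunE; case: (u x) => //= c; rewrite eqxx orbT.
have w0e : w0 \in ext2 u by rewrite inE tw0 uw0.
case: (boolP (w0 \in S)) => [w0S|w0nS]; first by exists w0.
exfalso; move/forallP: adm => /(_ a); rewrite /leqi_val /Gamma ffunE /=.
have fa : feval w0 (phi a) = ~~ (w0 a == Some true) by rewrite feval_phi // (negbTE w0nS).
move: fa ua; rewrite ffunE.
case: (u a) => [[]|] //= fa _.
- case: ifP => [/forallP /(_ w0)|_]; first by rewrite w0e fa.
  by case: ifP.
- case: ifP => [/forallP /(_ w0)|_]; first by rewrite w0e fa.
  case: ifP => // /forallP /(_ w0); by rewrite w0e fa.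
Qed.

End Constr.

Theorem proposition7 (A : finType) (S : {set interp A}) :
  in_signature (@mod_sem A) S -> S != set0 -> in_signature (@prf_sem A) S.
Proof.
case=> D <- ne.
have Stwo : forall v, v \in mod_sem D -> two_valued v.
  by move=> v; rewrite inE => /andP [].
exists (Dc (mod_sem D)); apply/setP => u; rewrite inE; apply/idP/idP.
- exact: prf_S.
- exact: S_prf.
Qed.
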